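(* Let $I$ be a countable index set with nested finite subsets $I_1\subset I_2\subset\cdots$, $\bigcup_nI_n=I$, let $W$ be a compact Hausdorff space and $m:\mathcal{F}[I]\to C^*(W)$ a minimal frame measure function. Then there exists a continuous bijection $\varphi:\mathbb{N}^0\to W$ with continuous inverse such that $m(\mathcal{F})(\varphi(\hat p))=\mu^0(\mathcal{F})(\hat p)$ for all $\hat p\in\mathbb{N}^0$ and all $\mathcal{F}\in\mathcal{F}[I]$.
   Context: $\mathcal{F}[I]$: families $\{f_i\}_{i\in I}$ in a separable Hilbert space that are frames for their closed span; $\tilde f_i=S^{-1}f_i$ canonical dual; $b(\mathcal{F})=(b_n)$ with $b_n=\sum_{i\in I_n}\langle f_i,\tilde f_i\rangle$. Frame compatible sequences: nonnegative $\mathbf{x}$ with $0\le x_1\le|I_1|$, $0\le x_i-x_{i-1}\le|I_i\setminus I_{i-1}|$; $X$ their set, $X^+=\{c\mathbf{x}:c\ge0,\mathbf{x}\in X\}$, $X^{\mathbb{R}}=X^+-X^+$. $\mathbf{x}\approx\mathbf{y}$ iff $\lim(x_n-y_n)/|I_n|=0$; $\mathbf{y}\leqq\mathbf{x}$ iff $\liminf(x_n-y_n)/|I_n|\ge0$. For compact Hausdorff $V$, $C^*(V)$: real continuous functions. A sequence measure function is a linear $m:X^{\mathbb{R}}\to C^*(V)$ with $m(\mathbf{x})=m(\mathbf{y})\iff\mathbf{x}\approx\mathbf{y}$ on $X^{\mathbb{R}}$, $m(\mathbf{x})\le m(\mathbf{y})\iff\mathbf{x}\leqq\mathbf{y}$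 on $X^+$, $m((|I_1|,|I_2|,\dots))=1$. It is separable if $m(X^{\mathbb{R}})$ separates points of $V$; reducible if for some compact $V'\subsetneq V$ the restriction $\mathbf{x}\mapsto m(\mathbf{x})|_{V'}$ is a sequence measure function; minimal if separable and not reducible. A frame measure function is $\mathcal{F}\mapsto m(b(\mathcal{F}))$ with $m$ a sequence measure function; it is minimal if $m$ is minimal. $\mathbb{N}^*$: free ultrafilters on $\mathbb{N}$ with its standard (Stone–Čech remainder) topology; $\mu(\mathbf{x})(p)=p\text{-}\lim_n x_n/|I_n|$ (ultrafilter limit). Define $p_1\sim p_2$ iff $\mu(\mathbf{x})(p_1)=\mu(\mathbf{x})(p_2)$ for all $\mathbf{x}\in X^{\mathbb{R}}$, $\mathbb{N}^0=\mathbb{N}^*/\sim$ with the quotient topology, $\hat p$ the class of $p$, and $\mu^0(\mathcal{F})(\hat p)=\mu(b(\mathcal{F}))(p)=p\text{-}\lim_n b_n(\mathcal{F})/|I_n|$. *)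

(* Defs.v *)
From HB Require Import structures.
From mathcomp Require Import all_boot all_order all_algebra finmap generic_quotient.
From mathcomp Require Import all_classical all_reals all_analysis.
From mathcomp Require Import complex.

Set Implicit Arguments.
Unset Strict Implicit.
Unset Printing Implicit Defensive.

Import Order.TTheory GRing.Theory Num.Theory numFieldTopology.Exports numFieldNormedType.Exports.
Local Open Scope classical_set_scope.
Local Open Scope ring_scope.

Section SeqDefs.
Variables (R : realType) (I : choiceType) (In : nat -> {fset I}).

Definition cardI (n : nat) : R := (#|` In n|)%:R.
Definition inX (x : nat -> R) : Prop :=
  (0 <= x 0%N <= cardI 0%N) /\
  forall n, 0 <= x n.+1 - x n <= (#|` (In n.+1 `\` In n)%fset|)%:R.
Definition inXplus (x : nat -> R) : Prop :=
  exists (c : R) (y : nat -> R), [/\ 0 <= c, inX y & x = (fun n => c * y n)].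
Definition inXR (x : nat -> R) : Prop :=
  exists y z, [/\ inXplus y, inXplus z & x = (fun n => y n - z n)].
Definition seq_approx (x y : nat -> R) : Prop :=
  (fun n => (x n - y n) / cardI n) @ \oo --> (0 : R).
Definition seq_leqq (y x : nat -> R) : Prop :=
  (0 <= limn_einf (fun n => ((x n - y n) / cardI n)%:E))%E.

Definition smf_on (V : topologicalType) (S : set V) (m : (nat -> R) -> V -> R) : Prop :=
  [/\ (forall x, inXR x -> {within S, continuous (m x)}),
      (forall (a : R) x y, inXR x -> inXR y -> forall v, S v ->
          m (fun n => a * x n + y n) v = a * m x v + m y v),
      (forall x y, inXR x -> inXR y ->
          ((forall v, S v -> m x v = m y v) <-> seq_approx x y)),
      (forall x y, inXplus x -> inXplus y ->
          ((forall v, S v -> m x v <= m y v) <-> seq_leqq x y)) &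
      (forall v, S v -> m cardI v = 1)].

Definition seq_measure_fun (V : topologicalType) (m : (nat -> R) -> V -> R) :=
  smf_on [set: V] m.
Definition smf_separable (V : topologicalType) (m : (nat -> R) -> V -> R) :=
  forall v w : V, v <> w -> exists x, inXR x /\ m x v <> m x w.
Definition smf_reducible (V : topologicalType) (m : (nat -> R) -> V -> R) :=
  exists V' : set V, [/\ compact V', V' `<` [set: V] & smf_on V' m].
Definition smf_minimal (V : topologicalType) (m : (nat -> R) -> V -> R) :=
  smf_separable m /\ ~ smf_reducible m.
End SeqDefs.

Definition free_ultrafilter (p : set_system nat) : Prop :=
  [/\ p setT, ~ p set0, (forall A B, p A -> p B -> p (A `&` B)) &
      (forall A B, A `<=` B -> p A -> p B)] /\
  (forall A, p A \/ p (~` A)) /\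
  (forall A, finite_set A -> ~ p A).

Definition Nstar := {p : set_system nat | free_ultrafilter p}.
HB.instance Definition _ := gen_eqMixin Nstar.
HB.instance Definition _ := gen_choiceMixin Nstar.

Definition ubase (A : set nat) : set Nstar := [set p | proj1_sig p A].

Lemma ubase_cover : \bigcup_(A in [set: set nat]) ubase A = [set: Nstar].
Proof.
apply/seteqP; split => // p _; exists setT => //.
by case: p => p [[]].
Qed.

Lemma ubase_join (A B : set nat) (t : Nstar) : [set: set nat] A -> [set: set nat] B ->
  ubase A t -> ubase B t ->
  exists k, [/\ [set: set nat] k, ubase k t & ubase k `<=` ubase A `&` ubase B].
Proof.
move=> _ _ At Bt; exists (A `&` B); split => //.
  by case: t At Bt => p [[]] /= ? ? pI *; apply: pI.
move=> [q [[_ _ _ qU] _]] /= qAB; split; apply: qU qAB; by move=> x [].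
Qed.

HB.instance Definition _ := isBaseTopological.Build Nstar ubase_cover ubase_join.

Section Quot.
Variables (R : realType) (I : choiceType) (In : nat -> {fset I}).

Definition mu (x : nat -> R) (p : Nstar) : R :=
  lim ((fun n => x n / @cardI R I In n) @ proj1_sig p).

Definition sim (p q : Nstar) : bool :=
  `[< forall x, inXR In x -> mu x p = mu x q >].

Lemma sim_refl : reflexive sim.
Proof. by move=> p; apply/asboolP. Qed.
Lemma sim_sym : symmetric sim.
Proof.
by move=> p q; apply/asboolP/asboolP => h x hx; rewrite h.
Qed.
Lemma sim_trans : transitive sim.
Proof.
move=> q p r /asboolP h1 /asboolP h2; apply/asboolP => x hx.
by rewrite h1 // h2.
Qed.

Definition sim_equiv := EquivRel sim sim_refl sim_sym sim_trans.

Definition N0 := quotient_topology {eq_quot sim_equiv}%qT.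

Definition mu0 (x : nat -> R) (q : N0) : R := mu x (repr q).
End Quot.

Section Hilbert.
Variables (R : realType) (H : lmodType R[i]) (ip : H -> H -> R[i]).

Definition is_inner_product : Prop :=
  [/\ (forall a x y z, ip (a *: x + y) z = a * ip x z + ip y z),
      (forall x y, ip y x = (ip x y)^*),
      (forall x, 0 <= ip x x) &
      (forall x, ip x x = 0 -> x = 0)].
Definition hconv (u : nat -> H) (l : H) : Prop :=
  forall e : R[i], 0 < e -> exists N, forall n, (N <= n)%N -> ip (u n - l) (u n - l) < e.
Definition hcauchy (u : nat -> H) : Prop :=
  forall e : R[i], 0 < e -> exists N, forall n k, (N <= n)%N -> (N <= k)%N ->
    ip (u n - u k) (u n - u k) < e.
Definition is_separable_hilbert : Prop :=
  [/\ is_inner_product,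
      (forall u, hcauchy u -> exists l, hconv u l) &
      (exists d : nat -> H, forall x (e : R[i]), 0 < e -> exists n, ip (x - d n) (x - d n) < e)].

Variable I : choiceType.
Implicit Types (F : I -> H).

Definition in_cspan F (x : H) : Prop :=
  forall e : R[i], 0 < e -> exists (s : seq I) (c : I -> R[i]),
    ip (x - \sum_(i <- s) c i *: F i) (x - \sum_(i <- s) c i *: F i) < e.
Definition is_frame F : Prop :=
  exists A B : R[i], [/\ 0 < A, 0 < B & forall x, in_cspan F x ->
    (forall s : seq I, uniq s -> \sum_(i <- s) `|ip x (F i)| ^+ 2 <= B * ip x x) /\
    (forall c : R[i], c < A * ip x x ->
        exists s : seq I, uniq s /\ c < \sum_(i <- s) `|ip x (F i)| ^+ 2)].
Definition hsum_to (g : I -> H) (l : H) : Prop :=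
  forall e : R[i], 0 < e -> exists s0 : seq I, forall s : seq I, uniq s -> {subset s0 <= s} ->
    ip (\sum_(i <- s) g i - l) (\sum_(i <- s) g i - l) < e.
Definition is_canonical_dual F (Ft : I -> H) : Prop :=
  forall i, in_cspan F (Ft i) /\ hsum_to (fun j => ip (Ft i) (F j) *: F j) (F i).

Definition bframe (In : nat -> {fset I}) F (Ft : I -> H) : nat -> R :=
  fun n => complex.Re (\sum_(i <- In n) ip (F i) (Ft i)).
End Hilbert.

Definition frame_measure_fun (R : realType) (I : choiceType) (H : lmodType R[i])
  (ip : H -> H -> R[i]) (In : nat -> {fset I}) (V : topologicalType)
  (m : (nat -> R) -> V -> R) (F Ft : I -> H) : V -> R :=
  m (bframe ip In F Ft).

(* Main.v *)
Require Import Defs.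
From HB Require Import structures.
From mathcomp Require Import all_boot all_order all_algebra finmap generic_quotient.
From mathcomp Require Import all_classical all_reals all_analysis.
From mathcomp Require Import complex.
From mathcomp Require Import ring lra.
Import Order.TTheory GRing.Theory Num.Theory numFieldTopology.Exports numFieldNormedType.Exports.
Local Open Scope classical_set_scope.
Local Open Scope ring_scope.

Set Implicit Arguments.
Unset Strict Implicit.
Unset Printing Implicit Defensive.
Section PartA.
Variables (R : realType) (I : choiceType) (In : nat -> {fset I}).
Hypothesis hnest : forall n, (In n `<=` In n.+1)%fset.

Local Notation c := (@cardI R I In).
Definition dd (n : nat) : R := (#|` (In n.+1 `\` In n)%fset|)%:R.

Lemma c_succ n : c n.+1 = c n + dd n.
Proof.
rewrite /cardI /dd (cardfsDS (hnest n)) natrB ?fsubset_leq_card //.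
by rewrite addrC subrK.
Qed.

Lemma c_ge0 n : 0 <= c n. Proof. exact: ler0n. Qed.
Lemma dd_ge0 n : 0 <= dd n. Proof. exact: ler0n. Qed.

Definition bnd (x : nat -> R) := exists C, 0 < C /\
  `|x 0%N| <= C * c 0%N /\ forall n, `|x n.+1 - x n| <= C * dd n.

Lemma inX_c : inX In c.
Proof.
split; first by rewrite c_ge0 lexx.
by move=> n; rewrite c_succ addrC addKr dd_ge0 lexx.
Qed.

Lemma bnd_abs_le (x : nat -> R) C : `|x 0%N| <= C * c 0%N -> (forall n, `|x n.+1 - x n| <= C * dd n) ->
  forall n, `|x n| <= C * c n.
Proof.
move=> h0 hs; elim=> // n ih.
rewrite c_succ mulrDr; apply: le_trans (lerD ih (hs n)).
by have := ler_normD (x n.+1 - x n) (x n); rewrite subrK addrC.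
Qed.

Lemma bnd_div (x : nat -> R) : bnd x -> exists C, 0 < C /\ forall n, `|x n / c n| <= C.
Proof.
move=> [C [C0 [h0 hs]]]; exists C; split => // n.
have := bnd_abs_le h0 hs n.
have [->|cn0] := eqVneq (c n) 0; first by rewrite invr0 !mulr0 normr0 => _; exact: ltW.
have cn : 0 < c n by rewrite lt_def cn0 c_ge0.
by rewrite normrM normfV (gtr0_norm cn) ler_pdivrMr.
Qed.

Lemma XR_bnd (x : nat -> R) : inXR In x -> bnd x.
Proof.
move=> [y [z [[a [y' [a0 [hy0 hys] ->]]] [b [z' [b0 [hz0 hzs] ->]]] ->]]].
exists (a + b + 1); split; first by rewrite ltr_wpDl // addr_ge0.
have cb n : 0 <= c n := c_ge0 n.
split.
  move: hy0 hz0 => /andP[y0 y1] /andP[z0 z1].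
  apply: (le_trans (ler_normB _ _)); rewrite !normrM (ger0_norm a0) (ger0_norm b0).
  rewrite (ger0_norm y0) (ger0_norm z0) !mulrDl mul1r -addrA lerD //.
    by rewrite ler_wpM2l.
  by rewrite ler_wpDr // ler_wpM2l.
move=> n; move: (hys n) (hzs n) => /andP[y0 y1] /andP[z0 z1].
rewrite (_ : _ - _ = a * (y' n.+1 - y' n) - b * (z' n.+1 - z' n)); last by ring.
apply: (le_trans (ler_normB _ _)); rewrite !normrM (ger0_norm a0) (ger0_norm b0).
rewrite (ger0_norm y0) (ger0_norm z0) !mulrDl mul1r -addrA lerD //.
  by rewrite ler_wpM2l ?normr_ge0.
by rewrite ler_wpDr ?dd_ge0 // ler_wpM2l.
Qed.

Lemma bnd_XR (x : nat -> R) : bnd x -> inXR In x.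
Proof.
move=> [C [C0 [h0 hs]]].
exists (fun n => x n + C * c n), (fun n => C * c n); split; last first.
- by apply: funext => n; rewrite addrK.
- by exists C, c; split => //; [exact: ltW|exact: inX_c].
exists (2 * C), (fun n => (x n + C * c n) / (2 * C)); split.
- by rewrite mulr_ge0 // ltW.
- have C2 : 0 < 2 * C by rewrite mulr_gt0.
  split.
    move: h0; rewrite ler_norml => /andP[h1 h2].
    apply/andP; split; first by rewrite divr_ge0 ?(ltW C2) //; lra.
    by rewrite ler_pdivrMr //; lra.
  move=> n; rewrite -mulrBl.
  rewrite (_ : _ - _ = x n.+1 - x n + C * dd n); last by rewrite c_succ; ring.
  move: (hs n); rewrite ler_norml => /andP[h1 h2].
  apply/andP; split; first by rewrite divr_ge0 ?(ltW C2) //; lra.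
  by rewrite ler_pdivrMr //; lra.
- by apply: funext => n; rewrite [RHS]mulrC divfK // gt_eqF // mulr_gt0.
Qed.

Lemma XRE (x : nat -> R) : inXR In x <-> bnd x.
Proof. by split; [exact: XR_bnd|exact: bnd_XR]. Qed.

Lemma bnd_lin (a : R) (x y : nat -> R) : bnd x -> bnd y -> bnd (fun n => a * x n + y n).
Proof.
move=> [C [C0 [h0 hs]]] [D [D0 [k0 ks]]]; exists (`|a| * C + D); split.
  by rewrite ltr_wpDl // mulr_ge0 // ltW.
split.
  apply: (le_trans (ler_normD _ _)); rewrite mulrDl lerD // normrM -mulrA.
  by rewrite ler_wpM2l ?normr_ge0.
move=> n; rewrite (_ : _ - _ = a * (x n.+1 - x n) + (y n.+1 - y n)); last by ring.
apply: (le_trans (ler_normD _ _)); rewrite mulrDl lerD // normrM -mulrA.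
by rewrite ler_wpM2l ?normr_ge0.
Qed.

Lemma bnd_c : bnd c.
Proof.
exists 1; split => //; split; first by rewrite mul1r ger0_norm ?c_ge0.
by move=> n; rewrite c_succ addrC addKr mul1r ger0_norm ?dd_ge0.
Qed.

Lemma bnd_0 : bnd (fun=> 0).
Proof. by exists 1; split => //; split => [|n]; rewrite ?subrr normr0 mul1r ?c_ge0 ?dd_ge0. Qed.

Lemma bnd_abs (x : nat -> R) : bnd x -> bnd (fun n => `|x n|).
Proof.
move=> [C [C0 [h0 hs]]]; exists C; split => //; split; first by rewrite normr_id.
by move=> n; exact: le_trans (ler_dist_dist _ _) (hs n).
Qed.

Lemma bnd_scale (a : R) (x : nat -> R) : bnd x -> bnd (fun n => a * x n).
Proof.
move=> h; have -> : (fun n => a * x n) = (fun n => a * x n + 0).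
  by apply: funext => n; rewrite addr0.
exact: bnd_lin h bnd_0.
Qed.

Lemma bnd_add (x y : nat -> R) : bnd x -> bnd y -> bnd (fun n => x n + y n).
Proof.
move=> h k; have -> : (fun n => x n + y n) = (fun n => 1 * x n + y n).
  by apply: funext => n; rewrite mul1r.
exact: bnd_lin h k.
Qed.

Lemma bnd_sub (x y : nat -> R) : bnd x -> bnd y -> bnd (fun n => x n - y n).
Proof.
move=> h k; have -> : (fun n => x n - y n) = (fun n => (-1) * y n + x n).
  by apply: funext => n; rewrite addrC mulN1r.
exact: bnd_lin k h.
Qed.

Lemma bnd_sum (T : eqType) (s : seq T) (F : T -> nat -> R) :
  (forall i, i \in s -> bnd (F i)) -> bnd (fun n => \sum_(i <- s) F i n).
Proof.
elim: s => [|a s ih] h.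
  have -> : (fun n => \sum_(i <- [::]) F i n) = (fun=> 0).
    by apply: funext => n; rewrite big_nil.
  exact: bnd_0.
have -> : (fun n => \sum_(i <- a :: s) F i n) = (fun n => F a n + \sum_(i <- s) F i n).
  by apply: funext => n; rewrite big_cons.
apply: bnd_add; first exact: h a (mem_head _ _).
by apply: ih => i hi; apply: h; rewrite in_cons hi orbT.
Qed.

Lemma Xplus_bnd (x : nat -> R) : inXplus In x -> bnd x.
Proof.
move=> hx; apply: XR_bnd; exists x, (fun=> 0); split => //.
  by exists 0, c; split => //; [exact: inX_c| apply: funext => n; rewrite mul0r].
by apply: funext => n; rewrite subr0.
Qed.

End PartA.
Lemma Nstar_proper (p : Nstar) : ProperFilter (proj1_sig p).
Proof.
case: p => P [[PT P0 PI PS] _] /=.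
by constructor => //; constructor.
Qed.
#[global] Existing Instance Nstar_proper.

Lemma Nstar_ultra (p : Nstar) (A : set nat) : proj1_sig p A \/ proj1_sig p (~` A).
Proof. by case: p => P [? [h ?]]; apply: h. Qed.

Lemma Nstar_free (p : Nstar) (A : set nat) : finite_set A -> ~ proj1_sig p A.
Proof. by case: p => P [? [? h]]; apply: h. Qed.

Lemma Nstar_cofin (p : Nstar) N : proj1_sig p [set n | (N <= n)%N].
Proof.
case: (Nstar_ultra p [set n | (N <= n)%N]) => // h; exfalso.
apply: (Nstar_free (p := p) _ h); apply: sub_finite_set (finite_II N).
by move=> n /= /negP; rewrite -ltnNge.
Qed.

Lemma finite_nat_bound (A : set nat) : finite_set A ->
  exists N, forall n, A n -> (n < N)%N.
Proof.
move=> fA; exists (\max_(i <- fset_set A) i).+1 => n An; rewrite ltnS.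
have h : n \in fset_set A by rewrite in_fset_set // inE.
exact: (@leq_bigmax_seq _ _ xpredT id n h).
Qed.

Lemma Nstar_extend (G : set_system nat) : ProperFilter G ->
  (forall N, G [set n | (N <= n)%N]) -> exists p : Nstar, G `<=` proj1_sig p.
Proof.
move=> FG hG; have [U [UU GU]] := ultraFilterLemma FG.
have fu : free_ultrafilter U.
  split; first split.
  - exact: filterT.
  - exact: filter_not_empty.
  - by move=> A B; exact: filterI.
  - by move=> A B; exact: filterS.
  split; first by move=> A; exact: in_ultra_setVsetC.
  move=> A /finite_nat_bound [N hN] UA.
  have : U (A `&` [set n | (N <= n)%N]) by apply: filterI => //; exact: GU.
  suff -> : A `&` [set n | (N <= n)%N] = set0 by exact: filter_not_empty.
  apply/seteqP; split => // n [/hN]; rewrite /= ltnNge => /negP //.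
by exists (exist _ U fu).
Qed.

Section PartB.
Variables (R : realType) (I : choiceType) (In : nat -> {fset I}).
Hypothesis hnest : forall n, (In n `<=` In n.+1)%fset.
Local Notation c := (@cardI R I In).
Local Notation bnd := (@bnd R I In).
Local Notation mu := (@mu R I In).
Hypothesis hpos : exists N, forall n, (N <= n)%N -> 0 < c n.

Lemma mu_spec (x : nat -> R) (p : Nstar) : bnd x ->
  (fun n => x n / c n) @ proj1_sig p --> mu x p.
Proof.
move=> bx; have [C [C0 hC]] := bnd_div hnest bx.
set f := fun n => x n / c n.
suff [l hl] : exists l : R, f @ proj1_sig p --> l by exact: (cvgP l hl).
have [|l [_ clu]] := @segment_compact R (- C) C (f @ proj1_sig p) _.
  apply: filterS (filterT : proj1_sig p setT) => n _ /=.
  by rewrite in_itv /= -ler_norml hC.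
exists l => B /= Bl.
case: (Nstar_ultra p (f @^-1` B)) => // hc; exfalso.
by have [t [ht1 ht2]] := clu (~` B) B hc Bl.
Qed.

Lemma mu_eq (x : nat -> R) (p : Nstar) l :
  (fun n => x n / c n) @ proj1_sig p --> l -> mu x p = l.
Proof. by move=> hl; exact: (cvg_lim (@norm_hausdorff _ R^o) hl). Qed.

Lemma mu_lin (a : R) (x y : nat -> R) (p : Nstar) : bnd x -> bnd y ->
  mu (fun n => a * x n + y n) p = a * mu x p + mu y p.
Proof.
move=> bx byy; apply: mu_eq.
have -> : (fun n => (a * x n + y n) / c n) =
   (fun n => a * (x n / c n) + y n / c n).
  by apply: funext => n; rewrite mulrDl mulrA.
have hx := mu_spec (p:=p) bx; have hy := mu_spec (p:=p) byy.
have ha : (fun n => a * (x n / c n)) @ proj1_sig p --> a * mu x p.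
  exact: (cvgM (cvg_cst a) hx).
exact: (cvgD ha hy).
Qed.

Lemma mu_abs (x : nat -> R) (p : Nstar) : bnd x ->
  mu (fun n => `|x n|) p = `|mu x p|.
Proof.
move=> bx; apply: mu_eq.
have -> : (fun n => `|x n| / c n) = (fun n => `|x n / c n|).
  by apply: funext => n; rewrite normrM normfV (ger0_norm (c_ge0 _ _ _)).
exact: cvg_norm (mu_spec (p:=p) bx).
Qed.

Lemma mu_c (p : Nstar) : mu c p = 1.
Proof.
apply: mu_eq; move=> B /= hB; have [N hN] := hpos.
apply: filterS (Nstar_cofin p N) => n hn /=.
by rewrite divff ?(gt_eqF (hN n hn)) //; exact: nbhs_singleton hB.
Qed.

Lemma mu_0 (p : Nstar) : mu (fun=> 0) p = 0.
Proof.
apply: mu_eq; have -> : (fun n => 0 / c n) = (fun=> (0:R)).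
  by apply: funext => n; rewrite mul0r.
exact: cvg_cst.
Qed.

Lemma mu_closed (x : nat -> R) (p : Nstar) (S : set R) : bnd x -> closed S ->
  proj1_sig p [set n | S (x n / c n)] -> S (mu x p).
Proof. by move=> bx cS hS; exact: (closed_cvg _ cS hS _ (mu_spec (p:=p) bx)). Qed.

Lemma mu_sum (T : eqType) (s : seq T) (F : T -> nat -> R) (p : Nstar) :
  (forall i, i \in s -> bnd (F i)) ->
  mu (fun n => \sum_(i <- s) F i n) p = \sum_(i <- s) mu (F i) p.
Proof.
elim: s => [|a s ih] h.
  have -> : (fun n => \sum_(i <- [::]) F i n) = (fun=> 0).
    by apply: funext => n; rewrite big_nil.
  by rewrite mu_0 big_nil.
have bs : bnd (fun n => \sum_(i <- s) F i n).
  by apply: bnd_sum => i hi; apply: h; rewrite in_cons hi orbT.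
have ha : bnd (F a) by apply: h; exact: mem_head.
rewrite big_cons -ih; last by move=> i hi; apply: h; rewrite in_cons hi orbT.
rewrite -[mu (F a) p]mul1r -mu_lin //; congr mu; apply: funext => n.
by rewrite big_cons mul1r.
Qed.

End PartB.
Lemma einf_ge0 (R : realType) (u : nat -> R) :
  (\forall n \near \oo, 0 <= u n) -> (0 <= limn_einf (fun n => (u n)%:E))%E.
Proof.
case=> N _ hN; rewrite limn_einf_lim; apply: lime_ge; first exact: is_cvg_einfs.
exists N => // k /= hk; apply: le_ereal_inf_tmp => _ [j /= hj <-].
by rewrite lee_fin; apply: hN; exact: leq_trans hk hj.
Qed.

Lemma einf_ge0_near (R : realType) (u : nat -> R) :
  (0 <= limn_einf (fun n => (u n)%:E))%E ->
  forall e : R, 0 < e -> \forall n \near \oo, - e < u n.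
Proof.
move=> h e e0.
have E : limn_einf (fun n => (u n)%:E) = ereal_sup (range (einfs (fun n => (u n)%:E))).
  by rewrite limn_einf_lim; apply/cvg_lim => //; exact: cvg_einfs_sup.
have : ((- e)%:E < ereal_sup (range (einfs (fun n => (u n)%:E))))%E.
  by rewrite -E; apply: lt_le_trans h; rewrite lte_fin oppr_lt0.
case/ereal_sup_gt => _ [N _ <-] hN; exists N => // k /= hk.
rewrite -lte_fin; apply: lt_le_trans hN _; apply: ereal_inf_lbound.
by exists k.
Qed.

Lemma compact_finI (T : topologicalType) (J : choiceType) (D : set J) (f : J -> set T) :
  compact [set: T] -> (exists j, D j) -> (forall j, D j -> closed (f j)) ->
  finI D f -> exists t, forall j, D j -> f j t.
Proof.
move=> cT [j0 Dj0] cf fi.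
have PF := finI_filter fi.
have [|t [_ clt]] := cT _ PF; first exact: filterT.
exists t => j Dj; apply: (cf j Dj) => B Bt.
by apply: clt Bt; exists (f j); [exact: finI_from1|].
Qed.

Lemma closed_dist (R : realType) (a e : R) : closed [set t : R | `|t - a| <= e].
Proof.
have -> : [set t : R | `|t - a| <= e] = [set t | t <= a + e] `&` [set t | a - e <= t].
  by apply/seteqP; split => t /=; rewrite ler_distl;
    [case/andP => h1 h2; split | case => h1 h2; apply/andP; split].
by apply: closedI; [exact: closed_le|exact: closed_ge].
Qed.

Lemma le0_all (R : realType) (d : R) : 0 <= d -> (forall e, 0 < e -> d <= e) -> d = 0.
Proof.
move=> d0 h; apply/eqP; rewrite eq_le d0 andbT; apply/negP => /negP.
rewrite -ltNge => dp; have := h (d / 2); rewrite divr_gt0 // => /(_ isT); lra.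
Qed.

Lemma sum_ge_term (R : realType) (T : eqType) (s : seq T) (F : T -> R) i :
  i \in s -> (forall j, j \in s -> 0 <= F j) -> F i <= \sum_(j <- s) F j.
Proof.
elim: s => // a s ih; rewrite in_cons => /orP[/eqP ->|hi] h; rewrite big_cons.
  rewrite lerDl big_seq; apply: sumr_ge0 => j hj; apply: h.
  by rewrite in_cons hj orbT.
apply: le_trans (ih hi _) _; first by move=> j hj; apply: h; rewrite in_cons hj orbT.
by rewrite lerDr; apply: h; exact: mem_head.
Qed.

Section PartC.
Variables (R : realType) (I : choiceType) (In : nat -> {fset I}).
Hypothesis hnest : forall n, (In n `<=` In n.+1)%fset.
Local Notation c := (@cardI R I In).
Local Notation bnd := (@bnd R I In).
Local Notation mu := (@mu R I In).
Hypothesis hpos : exists N, forall n, (N <= n)%N -> 0 < c n.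
Variables (W : topologicalType) (m : (nat -> R) -> W -> R).
Hypothesis hm : seq_measure_fun In m.
Hypothesis hWc : compact [set: W].

Lemma m_cont x : bnd x -> continuous (m x).
Proof.
move=> bx; case: hm => h _ _ _ _.
by apply/continuous_subspace_setT; apply: h; exact: bnd_XR.
Qed.

Lemma m_lin (a : R) (x y : nat -> R) v : bnd x -> bnd y ->
  m (fun n => a * x n + y n) v = a * m x v + m y v.
Proof.
move=> bx byy; case: hm => _ h _ _ _.
by apply: h => //; exact: bnd_XR.
Qed.

Lemma m_0 v : m (fun=> 0) v = 0.
Proof.
have := m_lin 1 v (@bnd_0 R I In) (@bnd_0 R I In).
have -> : (fun n : nat => 1 * (0:R) + 0) = (fun=> 0) by apply: funext => n; rewrite mul1r addr0.
by rewrite mul1r => h; lra.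
Qed.

Lemma m_scale (a : R) (x : nat -> R) v : bnd x -> m (fun n => a * x n) v = a * m x v.
Proof.
move=> bx; have := m_lin a v bx (@bnd_0 R I In); rewrite m_0 addr0 => <-.
by congr m; apply: funext => n; rewrite addr0.
Qed.

Lemma m_add (x y : nat -> R) v : bnd x -> bnd y -> m (fun n => x n + y n) v = m x v + m y v.
Proof.
move=> bx byy; have := m_lin 1 v bx byy; rewrite mul1r => <-.
by congr m; apply: funext => n; rewrite mul1r.
Qed.

Lemma m_sub (x y : nat -> R) v : bnd x -> bnd y -> m (fun n => x n - y n) v = m x v - m y v.
Proof.
move=> bx byy; have := m_lin (-1) v byy bx; rewrite mulN1r addrC => <-.
by congr m; apply: funext => n; rewrite mulN1r addrC.
Qed.

Lemma m_c v : m c v = 1.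
Proof. by case: hm => _ _ _ _ h; exact: h. Qed.

Lemma m_sum (T : eqType) (s : seq T) (F : T -> nat -> R) v :
  (forall i, i \in s -> bnd (F i)) ->
  m (fun n => \sum_(i <- s) F i n) v = \sum_(i <- s) m (F i) v.
Proof.
elim: s => [|a s ih] h.
  have -> : (fun n => \sum_(i <- [::]) F i n) = (fun=> 0).
    by apply: funext => n; rewrite big_nil.
  by rewrite m_0 big_nil.
have bs : bnd (fun n => \sum_(i <- s) F i n).
  by apply: bnd_sum => i hi; apply: h; rewrite in_cons hi orbT.
have ha : bnd (F a) by apply: h; exact: mem_head.
rewrite big_cons -ih; last by move=> i hi; apply: h; rewrite in_cons hi orbT.
rewrite -m_add //; congr m; apply: funext => n.
by rewrite big_cons.
Qed.

Lemma m_le_iff (x y : nat -> R) : bnd x -> bnd y ->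
  (seq_leqq In x y <-> forall v, m x v <= m y v).
Proof.
move=> bx byy; have bd := bnd_sub byy bx.
have [y' [z' [hy' hz' e]]] := bnd_XR hnest bd.
have ee n : y n - x n = y' n - z' n by exact: (congr1 (fun f => f n) e).
have by' := Xplus_bnd hnest hy'; have bz' := Xplus_bnd hnest hz'.
have E : seq_leqq In x y = seq_leqq In z' y'.
  by rewrite /seq_leqq; congr (_ <= _)%E; congr limn_einf; apply: funext => n; rewrite ee.
have M v : m y v - m x v = m y' v - m z' v.
  by rewrite -m_sub // -m_sub //; congr m.
rewrite E; case: hm => _ _ _ h _; rewrite -(h _ _ hz' hy').
split => H v; first by rewrite -subr_ge0 M subr_ge0; exact: H.
by move=> _; move: (H v); rewrite -subr_ge0 M subr_ge0.
Qed.

Lemma m_mono (x y : nat -> R) : bnd x -> bnd y -> (forall n, x n <= y n) ->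
  forall v, m x v <= m y v.
Proof.
move=> bx byy h; apply/m_le_iff => //; apply: einf_ge0.
by apply: nearW => n; rewrite divr_ge0 ?c_ge0 // subr_ge0.
Qed.

Lemma m_abs (x : nat -> R) v : bnd x -> `|m x v| <= m (fun n => `|x n|) v.
Proof.
move=> bx; have ba := bnd_abs bx.
rewrite ler_norml; apply/andP; split; last by apply: m_mono => // n; exact: ler_norm.
rewrite -mulN1r -m_scale //; apply: m_mono => //; first exact: bnd_scale.
by move=> n; rewrite mulN1r; have := lexx `|x n|; rewrite ler_norml => /andP[].
Qed.

Lemma mu_scale (a : R) (x : nat -> R) (p : Nstar) : bnd x -> mu (fun n => a * x n) p = a * mu x p.
Proof.
move=> bx; have := mu_lin hnest a p bx (@bnd_0 R I In); rewrite mu_0 addr0 => <-.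
by congr mu; apply: funext => n; rewrite addr0.
Qed.

Lemma mu_sub (x y : nat -> R) (p : Nstar) : bnd x -> bnd y -> mu (fun n => x n - y n) p = mu x p - mu y p.
Proof.
move=> bx byy; have := mu_lin hnest (-1) p byy bx; rewrite mulN1r addrC => <-.
by congr mu; apply: funext => n; rewrite mulN1r addrC.
Qed.

Lemma m_nonneg (u : nat -> R) : bnd u -> (forall p : Nstar, 0 <= mu u p) ->
  forall v, 0 <= m u v.
Proof.
move=> bu hp v.
suff H : forall e, 0 < e -> - e <= m u v.
  rewrite leNgt; apply/negP => hneg.
  have := H (- m u v / 2); rewrite divr_gt0 ?oppr_gt0 // => /(_ isT); lra.
move=> e e0.
have ev : \forall n \near \oo, - e <= u n / c n.
  apply: contrapT => hne.
  pose A := [set n | u n / c n < - e].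
  pose G := fun B : set nat => exists N, forall n, (N <= n)%N -> A n -> B n.
  have FG : ProperFilter G.
    constructor.
      move=> [N hN]; apply: hne; exists N => // n /= hn.
      by rewrite leNgt; apply/negP => h; exact: (hN n hn h).
    constructor.
    - by exists 0%N.
    - move=> B C [N1 h1] [N2 h2]; exists (maxn N1 N2) => n hn An.
      by rewrite geq_max in hn; case/andP: hn => hn1 hn2; split; [exact: h1|exact: h2].
    - by move=> B C BC [N h]; exists N => n hn An; apply: BC; exact: h.
  have [p hGp] := Nstar_extend FG (fun N => ex_intro _ N (fun n hn _ => hn)).
  have Ap : proj1_sig p A by apply: hGp; exists 0%N.
  have := hp p; have : mu u p <= - e.
    apply: (mu_closed hnest (S := [set t | t <= - e]) bu (@closed_le R (- e))).
    by apply: filterS Ap => n /= /ltW.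
  lra.
have bce : bnd (fun n => (- e) * c n) by apply: bnd_scale; exact: (bnd_c R hnest).
have := m_scale (- e) v (bnd_c R hnest); rewrite m_c mulr1 => <-.
apply: (proj1 (m_le_iff bce bu) _ v); apply: einf_ge0.
have [N hN] := hpos; case: ev => M _ hM.
exists (maxn N M) => // n /=; rewrite geq_max => /andP[hn1 hn2].
have cn := hN n hn1; have := hM n hn2.
rewrite mulNr opprK mulrDl mulfK ?gt_eqF //; lra.
Qed.

Lemma realize (p : Nstar) : exists w, forall x, bnd x -> m x w = mu x p.
Proof.
pose D := fun i : (nat -> R) * R => bnd i.1 /\ 0 < i.2.
pose f := fun i : (nat -> R) * R => [set w | `|m i.1 w - mu i.1 p| <= i.2].
have [|||w hw] := @compact_finI W _ D f hWc.
- by exists (c, 1); split => //; exact: (bnd_c R hnest).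
- move=> [x e] [bx _]; rewrite /f /=.
  apply: (@preimage_closed _ _ (m x) [set t | `|t - mu x p| <= e]).
    by move=> t _; exact: m_cont.
  exact: closed_dist.
- move=> D' sD'.
  pose h := fun i : (nat -> R) * R => fun n => i.2^-1 * `|i.1 n - mu i.1 p * c n|.
  have bh i : i \in D' -> bnd (h i).
    move=> /sD'; rewrite inE => -[bx _]; rewrite /h; apply: bnd_scale; apply: bnd_abs; apply: bnd_sub => //.
    by apply: bnd_scale; exact: (bnd_c R hnest).
  pose g := fun n => \sum_(i <- D') h i n.
  have bg : bnd g by exact: bnd_sum.
  have mug : mu g p = 0.
    rewrite /g (mu_sum hnest) //; apply: big1_seq => i /andP[_ iD].
    have := sD' i iD; rewrite inE => -[bx _].
    rewrite /h mu_scale; last by apply: bnd_abs; apply: bnd_sub => //; apply: bnd_scale; exact: (bnd_c R hnest).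
    rewrite (mu_abs hnest); last by apply: bnd_sub => //; apply: bnd_scale; exact: (bnd_c R hnest).
    rewrite mu_sub //; last by apply: bnd_scale; exact: (bnd_c R hnest).
    by rewrite mu_scale ?(mu_c hpos) ?mulr1 ?subrr ?normr0 ?mulr0 //; exact: (bnd_c R hnest).
  have [w hw] : exists w, m g w < 1.
    apply: contrapT => hne.
    have H : forall v, m c v <= m g v.
      move=> v; rewrite m_c leNgt; apply/negP => hv; apply: hne; by exists v.
    have hl : seq_leqq In c g := proj2 (m_le_iff (bnd_c R hnest) bg) H.
    have ev := einf_ge0_near hl (_ : 0 < 1/2); rewrite divr_gt0 // in ev.
    have : 1/2 <= mu g p.
      apply: (mu_closed hnest (S := [set t | 1/2 <= t]) bg (@closed_ge R (1/2))).
      have [N hN] := hpos; case: (ev isT) => M _ hM.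
      apply: filterS (Nstar_cofin p (maxn N M)) => n /=; rewrite geq_max => /andP[h1 h2].
      have cn := hN n h1; have := hM n h2.
      rewrite mulrBl divff ?gt_eqF //; lra.
    rewrite mug; lra.
  exists w => -[x e] /= iD.
  have := sD' _ iD; rewrite inE => -[/= bx e0]; rewrite /f /=.
  set a := mu x p.
  have bac : bnd (fun n => a * c n) by apply: bnd_scale; exact: (bnd_c R hnest).
  have bxa : bnd (fun n => x n - a * c n) by exact: bnd_sub.
  have e1 : m x w - a = m (fun n => x n - a * c n) w.
    by rewrite m_sub // m_scale ?m_c ?mulr1 //; exact: (bnd_c R hnest).
  have e2 : m (h (x, e)) w = e^-1 * m (fun n => `|x n - a * c n|) w.
    by rewrite /h /= m_scale //; exact: bnd_abs.
  have e3 : m (h (x, e)) w <= m g w.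
    rewrite /g m_sum; last exact: bh.
    apply: sum_ge_term => // j jD.
    rewrite -(m_0 w); apply: m_mono; [exact: (@bnd_0 R I In)|exact: bh|].
    by move=> n; rewrite /h mulr_ge0 // invr_ge0; have := sD' _ jD; rewrite inE => -[_ /ltW].
  have e4 : `|m x w - a| <= m (fun n => `|x n - a * c n|) w by rewrite e1; exact: m_abs.
  have e5 : m (fun n => `|x n - a * c n|) w = e * m (h (x, e)) w.
    by rewrite e2 mulrA mulfV ?mul1r // gt_eqF.
  have : e * m (h (x, e)) w <= e * 1.
    by rewrite ler_pM2l //; apply: ltW; apply: le_lt_trans hw.
  lra.
exists w => x bx; apply/eqP; rewrite -subr_eq0 -normr_eq0; apply/eqP.
apply: le0_all => // e e0; exact: (hw (x, e) (conj bx e0)).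
Qed.

End PartC.
Lemma sim_repr_pi (R : realType) (I : choiceType) (In : nat -> {fset I}) (p : Nstar) :
  sim R In (repr (\pi_(N0 R In) p)%qT) p.
Proof.
apply: (introT (@eqmodP _ (sim_equiv R In) (repr (\pi_(N0 R In) p)%qT) p)).
by rewrite reprK.
Qed.

Lemma N0_eq (R : realType) (I : choiceType) (In : nat -> {fset I}) (q1 q2 : N0 R In) :
  sim R In (repr q1) (repr q2) -> q1 = q2.
Proof.
move=> h; have := elimT (@eqmodP _ (sim_equiv R In) (repr q1) (repr q2)) h.
by rewrite !reprK.
Qed.

Lemma ubase_open (A : set nat) : open (ubase A : set Nstar).
Proof. by exists [set A] => //; rewrite bigcup_set1. Qed.

Lemma Nstar_nbhs (p : Nstar) (B : set Nstar) : nbhs p B ->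
  exists A, proj1_sig p A /\ ubase A `<=` B.
Proof.
rewrite nbhsE /=; case=> O1 [oO Op1] OB1; case: oO => D' _ E.
move: Op1; rewrite -E; case=> A DA hA; exists A; split => // q hq.
by apply: OB1; rewrite -E; exists A.
Qed.

Lemma Nstar_compact : compact [set: Nstar].
Proof.
move=> F PF FT.
pose G := fun A : set nat => F (ubase A).
have ubT : ubase setT = setT.
  by apply/seteqP; split => // q _; case: q => P [[PT ? ? ?] ?].
have ub0 : ubase set0 = set0.
  by apply/seteqP; split => // q; case: q => P [[? P0 ? ?] ?].
have FiG : Filter G.
  constructor.
  - by rewrite /G ubT; exact: filterT.
  - move=> A B GA GB; rewrite /G in GA GB *; apply: filterS (filterI GA GB) => q [qA qB].
    by case: q qA qB => P [[? ? PI ?] ?] /=; exact: PI.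
  - move=> A B AB; rewrite /G; apply: filterS => q; case: q => P [[? ? ? PS] ?] /=; exact: PS.
have FG : ProperFilter G.
  apply: Build_ProperFilter_ex => A GA; apply: contrapT => hne.
  have A0 : A = set0 by apply/seteqP; split => // n An; apply: hne; exists n.
  by move: GA; rewrite /G A0 ub0; exact: filter_not_empty.
have [|p Gp] := Nstar_extend FG.
  move=> N; rewrite /G (_ : ubase _ = setT) //.
  by apply/seteqP; split => // q _; exact: Nstar_cofin.
exists p; split => // B N FB /Nstar_nbhs [A [pA AN]].
apply: contrapT => hne.
have : G (~` A).
  apply: filterS FB => q Bq; case: (Nstar_ultra q A) => // qA.
  by exfalso; apply: hne; exists q; split => //; exact: AN.
move=> /Gp pnA; have h : proj1_sig p (A `&` ~` A) by exact: filterI.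
by move: h; rewrite setICr; apply: (filter_not_empty (proj1_sig p)).
Qed.

Section PartE.
Variables (R : realType) (I : choiceType) (In : nat -> {fset I}).
Hypothesis hnest : forall n, (In n `<=` In n.+1)%fset.
Local Notation c := (@cardI R I In).
Local Notation bnd := (@bnd R I In).
Local Notation mu := (@mu R I In).
Hypothesis hpos : exists N, forall n, (N <= n)%N -> 0 < c n.
Variables (W : topologicalType) (m : (nat -> R) -> W -> R).
Hypothesis hm : seq_measure_fun In m.
Hypothesis hWc : compact [set: W].
Hypothesis hsep : smf_separable In m.

Definition wof (p : Nstar) : W := projT1 (cid (realize hnest hpos hm hWc p)).

Lemma wof_spec p x : bnd x -> m x (wof p) = mu x p.
Proof. by rewrite /wof; case: cid => w hw /=; exact: hw. Qed.

Lemma w_unique w1 w2 : (forall x, bnd x -> m x w1 = m x w2) -> w1 = w2.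
Proof.
move=> h; apply: contrapT => hne; have [x [hx hne2]] := hsep hne.
by apply: hne2; apply: h; exact: (XR_bnd hx).
Qed.

Lemma wof_cont : continuous wof.
Proof.
move=> p U /= hU; set w0 := wof p; have PFp := Nstar_proper p.
move: hU; rewrite nbhsE /=; case=> O [oO Ow0] OU.
pose D : set (option ((nat -> R) * R)) := fun o =>
  if o is Some i then bnd i.1 /\ 0 < i.2 else True.
pose f := fun o : option ((nat -> R) * R) =>
  if o is Some i then [set v | `|m i.1 v - m i.1 w0| <= i.2] else ~` O.
have nfi : ~ finI D f.
  move=> fi; have [|||v hv] := @compact_finI W _ D f hWc.
  - by exists None.
  - move=> [[x e] [bx _]|_] /=; last exact: open_closedC.
    apply: (@preimage_closed _ _ (m x) [set t | `|t - m x w0| <= e]).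
      by move=> t _; exact: m_cont.
    exact: closed_dist.
  - exact: fi.
  have vw0 : v = w0.
    apply: w_unique => x bx; apply/eqP; rewrite -subr_eq0 -normr_eq0; apply/eqP.
    by apply: le0_all => // e e0; exact: (hv (Some (x, e)) (conj bx e0)).
  by apply: (hv None Logic.I); rewrite vw0.
have [D' [sD' hD']] : exists D' : {fset option ((nat -> R) * R)},
    {subset D' <= D} /\ ~ (\bigcap_(i in [set` D']) f i !=set0).
  apply: contrapT => h; apply: nfi => D' sD'; apply: contrapT => h2.
  by apply: h; exists D'.
pose g := fun o : option ((nat -> R) * R) =>
  if o is Some i then [set n | `|i.1 n / c n - mu i.1 p| <= i.2 / 2] else setT.
have pA : proj1_sig p (\bigcap_(i in [set` D']) g i).
  apply: filter_bigI => -[[x e]|] iD; last exact: filterT.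
  have := sD' _ iD; rewrite inE => -[/= bx e0].
  have e2 : 0 < e / 2 by rewrite divr_gt0.
  have h := @cvgr_dist_le _ _ _ (proj1_sig p) (@filter_filter _ _ PFp) _ _
    (mu_spec hnest (p := p) bx) (e / 2) e2.
  suff : proj1_sig p [set n | `|x n / c n - mu x p| <= e / 2] by [].
  by apply: (@filterS _ _ (@filter_filter _ _ PFp) _ _ _ h) => n /=; rewrite distrC.
apply: (@filterS _ _ _ (ubase (\bigcap_(i in [set` D']) g i))).
  move=> q hq; apply: OU; apply: contrapT => nO; apply: hD'.
  exists (wof q) => -[[x e]|] /= iD; last exact: nO.
  have := sD' _ iD; rewrite inE => -[/= bx e0].
  rewrite /w0 !wof_spec //.
  have PFq := Nstar_proper q.
  have h : [set t | `|t - mu x p| <= e / 2] (mu x q).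
    apply: (@mu_closed R I In hnest x q [set t | `|t - mu x p| <= e / 2] bx (@closed_dist R (mu x p) (e / 2))).
    by apply: (@filterS _ _ (@filter_filter _ _ PFq) _ _ _ hq) => n /(_ (Some (x, e)) iD).
  move: h => /= h; apply: le_trans h _; rewrite ler_pdivrMr //; lra.
apply: open_nbhs_nbhs; split; first exact: ubase_open.
exact: pA.
Qed.

End PartE.
Section Hilb.
Local Open Scope complex_scope.
Variables (R : realType) (H : lmodType R[i]) (ip : H -> H -> R[i]).
Hypothesis hip : is_inner_product ip.
Local Notation Re := complex.Re.
Local Notation Im := complex.Im.
Local Notation nn x := (complex.Re (ip x x)).

Lemma ReD (x y : R[i]) : Re (x + y) = Re x + Re y. Proof. by case: x => a b; case: y => c d. Qed.
Lemma ReN (x : R[i]) : Re (- x) = - Re x. Proof. by case: x. Qed.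
Lemma ReB (x y : R[i]) : Re (x - y) = Re x - Re y. Proof. by rewrite ReD ReN. Qed.
Lemma ReRM (a : R) (z : R[i]) : Re (a%:C * z) = a * Re z.
Proof. by case: z => u v /=; rewrite mul0r subr0. Qed.
Lemma ReJ (z : R[i]) : Re (z^*)%C = Re z. Proof. by case: z. Qed.
Lemma Re_sum (T : Type) (s : seq T) (F : T -> R[i]) :
  Re (\sum_(i <- s) F i) = \sum_(i <- s) Re (F i).
Proof. elim: s => [|a s ih]; first by rewrite !big_nil. by rewrite !big_cons ReD ih. Qed.
Lemma ge0_real (z : R[i]) : 0 <= z -> z = (Re z)%:C /\ 0 <= Re z.
Proof. by case: z => a b; rewrite lecE /= => /andP[/eqP -> h]. Qed.
Lemma conjD (x y : R[i]) : (x + y)^*%C = (x^* + y^*)%C.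
Proof. by case: x => a b; case: y => c d /=; rewrite opprD. Qed.
Lemma conjM (x y : R[i]) : (x * y)^*%C = (x^* * y^*)%C.
Proof.
case: x => a b; case: y => c d /=; apply/eqP; rewrite eq_complex /=.
by apply/andP; split; apply/eqP; ring.
Qed.
Lemma conjN (x : R[i]) : (- x)^*%C = - (x^*)%C. Proof. by case: x. Qed.
Lemma conjK (x : R[i]) : (x^*)^*%C = x. Proof. by case: x => a b /=; rewrite opprK. Qed.

Lemma ipDl a x y z : ip (a *: x + y) z = a * ip x z + ip y z.
Proof. by case: hip => h _ _ _; exact: h. Qed.
Lemma ipC x y : ip y x = (ip x y)^*%C.
Proof. by case: hip => _ h _ _; exact: h. Qed.
Lemma ip_ge0 x : 0 <= ip x x.
Proof. by case: hip => _ _ h _; exact: h. Qed.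

Lemma ip0l z : ip 0 z = 0.
Proof.
have := ipDl 1 0 0 z; rewrite scaler0 addr0 mul1r => h.
have : ip 0 z + ip 0 z - ip 0 z = ip 0 z - ip 0 z by rewrite -h.
by rewrite addrK subrr.
Qed.
Lemma ipZl a x z : ip (a *: x) z = a * ip x z.
Proof. by have := ipDl a x 0 z; rewrite addr0 ip0l addr0. Qed.
Lemma ipAl x y z : ip (x + y) z = ip x z + ip y z.
Proof. by have := ipDl 1 x y z; rewrite scale1r mul1r. Qed.
Lemma ipNl x z : ip (- x) z = - ip x z.
Proof. by rewrite -scaleN1r ipZl mulN1r. Qed.
Lemma ipBl x y z : ip (x - y) z = ip x z - ip y z.
Proof. by rewrite ipAl ipNl. Qed.
Lemma ipZr a x z : ip z (a *: x) = (a^*)%C * ip z x.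
Proof. rewrite ipC ipZl conjM; congr (_ * _); exact: (esym (ipC x z)). Qed.
Lemma ipAr x y z : ip z (x + y) = ip z x + ip z y.
Proof. rewrite ipC ipAl conjD; congr (_ + _); [exact: (esym (ipC x z))|exact: (esym (ipC y z))]. Qed.
Lemma ipNr x z : ip z (- x) = - ip z x.
Proof. rewrite ipC ipNl conjN; congr (- _); exact: (esym (ipC x z)). Qed.
Lemma ipBr x y z : ip z (x - y) = ip z x - ip z y.
Proof. by rewrite ipAr ipNr. Qed.

Lemma ipsuml (T : Type) (s : seq T) (cf : T -> R[i]) (G : T -> H) z :
  ip (\sum_(j <- s) cf j *: G j) z = \sum_(j <- s) cf j * ip (G j) z.
Proof.
elim: s => [|a s ih]; first by rewrite !big_nil ip0l.
by rewrite !big_cons ipAl ipZl ih.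
Qed.

Lemma ipxx x : ip x x = (nn x)%:C. Proof. exact: (ge0_real (ip_ge0 x)).1. Qed.
Lemma nn_ge0 x : 0 <= nn x. Proof. exact: (ge0_real (ip_ge0 x)).2. Qed.
Lemma Re_ipC x y : Re (ip y x) = Re (ip x y). Proof. by rewrite ipC ReJ. Qed.

Lemma nn_expand (a : R) x y :
  nn (a%:C *: x - y) = a ^+ 2 * nn x - 2 * a * Re (ip x y) + nn y.
Proof.
rewrite ipBl ipBr ipBr !ipZl !ipZr conjc_real !ReB !ReRM (Re_ipC x y); ring.
Qed.

Lemma Re_ip_le x y : 2 * Re (ip x y) <= nn x + nn y.
Proof. by have := nn_ge0 (1%:C *: x - y); rewrite nn_expand; lra. Qed.

Lemma nn_N x : nn (- x) = nn x. Proof. by rewrite ipNl ipNr opprK. Qed.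

Lemma Re_ip_abs x y : 2 * `|Re (ip x y)| <= nn x + nn y.
Proof.
have h1 := Re_ip_le x y; have h2 := Re_ip_le (- x) y.
rewrite ipNl ReN nn_N in h2.
by case: (ler0P (Re (ip x y))) => h; lra.
Qed.

Lemma nn_add x y : nn (x + y) <= 2 * nn x + 2 * nn y.
Proof.
have := nn_expand 1 x (- y); rewrite scale1r opprK nn_N ipNr ReN => ->.
have := Re_ip_le x y; lra.
Qed.

End Hilb.
Section Frame.
Local Open Scope complex_scope.
Variables (R : realType) (H : lmodType R[i]) (ip : H -> H -> R[i]).
Hypothesis hip : is_inner_product ip.
Variable I : choiceType.
Local Notation Re := complex.Re.
Local Notation nn x := (complex.Re (ip x x)).

Lemma conjE (z : R[i]) : Num.conj z = (z^*)%C. Proof. by []. Qed.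

Lemma real_pos (A : R[i]) : 0 < A -> A = (Re A)%:C /\ 0 < Re A.
Proof. by case: A => u v; rewrite ltcE /= => /andP[/eqP -> h]. Qed.

Lemma frame_bound (F Ft : I -> H) : is_frame ip F -> is_canonical_dual ip F Ft ->
  exists C, 0 < C /\ forall i, `|Re (ip (F i) (Ft i))| <= C.
Proof.
case=> A [B [A0 B0 hfr]] hcd.
have [eA a0] := real_pos A0; have [eB b0] := real_pos B0.
set a := Re A in eA a0; set b := Re B in eB b0.
pose K := (2 * b + 2) / (a ^+ 2).
have K0 : 0 <= K by rewrite /K divr_ge0 // ?exprn_ge0 ?ltW //; lra.
exists ((b + K) / 2 + 1); split; first lra.
move=> i; set f := F i; set ft := Ft i.
have cspf : in_cspan ip F f.
  move=> e e0; exists [:: i], (fun=> 1); rewrite big_seq1 scale1r subrr (ip0l hip); exact: e0.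
have hf : nn f <= b.
  have [hup _] := hfr f cspf.
  have := hup [:: i] isT; rewrite big_seq1 normCK -/f (ipxx hip f) eB conjE conjc_real.
  rewrite lecE => /andP[_]; rewrite !ReRM /= => h.
  have := nn_ge0 hip f; nra.
have [hcspt hsum] := hcd i.
have [s0 hs0] := hsum 1 ltr01.
pose g := fun t : seq I => \sum_(j <- t) ip ft (F j) *: F j.
have hg t : uniq t -> {subset s0 <= t} -> nn (g t) <= 2 * b + 2.
  move=> ut st; have := hs0 t ut st; rewrite ltcE => /andP[_ /= h1].
  have := nn_add hip f (g t - f); rewrite addrC subrK => h2.
  lra.
have hsig t : \sum_(j <- t) `|ip ft (F j)| ^+ 2 = ip (g t) ft.
  rewrite /g (ipsuml hip); apply: eq_bigr => j _; rewrite normCK; congr (_ * _).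
  exact: (esym (ipC hip ft (F j))).
suff hN : nn ft <= K.
  have := Re_ip_abs hip f ft; lra.
rewrite leNgt; apply/negP => hK.
have hK' : 2 * b + 2 < nn ft * a ^+ 2.
  by move: hK; rewrite /K ltr_pdivrMr // exprn_gt0.
pose cc := (a ^+ 2 * nn ft + 2 * b + 2) / (2 * a).
have e2 : 2 * a * cc = a ^+ 2 * nn ft + 2 * b + 2.
  by rewrite /cc mulrC divfK // mulf_neq0 // gt_eqF.
have hcc : cc%:C < A * ip ft ft.
  rewrite eA (ipxx hip ft) ltcE /= !mulr0 !mul0r subr0 addr0 eqxx /=.
  rewrite /cc ltr_pdivrMr ?mulr_gt0 //; nra.
have [_ hlow] := hfr ft hcspt.
have [s [us hs]] := hlow _ hcc.
pose t := s ++ [seq j <- undup s0 | j \notin s].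
have ut : uniq t.
  rewrite cat_uniq us filter_uniq ?undup_uniq // andbT.
  by apply/hasPn => j; rewrite mem_filter => /andP[].
have st : {subset s0 <= t}.
  by move=> j hj; rewrite mem_cat mem_filter mem_undup hj andbT orbN.
have hst : \sum_(j <- s) `|ip ft (F j)| ^+ 2 <= \sum_(j <- t) `|ip ft (F j)| ^+ 2.
  rewrite big_cat /= lerDl; apply: sumr_ge0 => j _; exact: exprn_ge0.
have := lt_le_trans hs hst; rewrite hsig ltcE => /andP[_ /= hlt].
have hexp := nn_ge0 hip (a%:C *: ft - g t).
rewrite (nn_expand hip) (Re_ipC hip (g t) ft) in hexp.
have hgt := hg t ut st.
have h1 : 2 * a * cc < 2 * a * Re (ip (g t) ft) by rewrite ltr_pM2l // mulr_gt0.
clear hcc hs hst A0 B0 hfr hsum hs0 hcspt hcd.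
suff : (0:R) < 0 by rewrite ltxx.
lra.
Qed.

End Frame.

Lemma sum_le_const (R : realType) (T : Type) (s : seq T) (G : T -> R) (C : R) :
  (forall i, G i <= C) -> \sum_(i <- s) G i <= C * (size s)%:R.
Proof.
move=> h; elim: s => [|a s ih]; first by rewrite big_nil mulr0.
by rewrite big_cons /= -addn1 natrD mulrDr mulr1 addrC lerD.
Qed.

Lemma fsum_split (R : realType) (T : choiceType) (A B : {fset T}) (G : T -> R) :
  (B `<=` A)%fset -> \sum_(i <- A) G i = \sum_(i <- B) G i + \sum_(i <- (A `\` B)%fset) G i.
Proof.
move=> hBA; rewrite (big_fsetID _ (mem B)); congr (_ + _); apply: eq_fbigl => x; rewrite !inE.
  by apply/idP/idP => [/andP[]|h] //; rewrite h andbT; exact: (fsubsetP hBA).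
by rewrite andbC.
Qed.

Lemma bframe_bnd (R : realType) (I : choiceType) (In : nat -> {fset I})
    (hnest : forall n, (In n `<=` In n.+1)%fset)
    (H : lmodType R[i]) (ip : H -> H -> R[i]) (hH : is_separable_hilbert ip)
    (F Ft : I -> H) :
  is_frame ip F -> is_canonical_dual ip F Ft -> bnd In (bframe ip In F Ft).
Proof.
move=> hF hFt; have hip : is_inner_product ip by case: hH.
have [C [C0 hC]] := frame_bound hip hF hFt.
exists C; split => //; split.
  rewrite /bframe Re_sum; apply: le_trans (ler_norm_sum _ _ _) _.
  exact: sum_le_const.
move=> n; rewrite /bframe !Re_sum (fsum_split _ (hnest n)) addrC addKr.
apply: le_trans (ler_norm_sum _ _ _) _; exact: sum_le_const.
Qed.

Unset Implicit Arguments.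
Set Strict Implicit.

Theorem corollary6p18 (R : realType) (I : choiceType) (In : nat -> {fset I})
    (hnest : forall n, (In n `<=` In n.+1)%fset)
    (hunion : forall i : I, exists n, i \in In n)
    (i0 : I)
    (H : lmodType R[i]) (ip : H -> H -> R[i]) (hH : is_separable_hilbert ip)
    (W : topologicalType) (hWc : compact [set: W]) (hWh : hausdorff_space W)
    (m : (nat -> R) -> W -> R)
    (hm : seq_measure_fun In m) (hmin : smf_minimal In m) :
  exists (phi : N0 R In -> W) (psi : W -> N0 R In),
    [/\ continuous phi, continuous psi, cancel phi psi, cancel psi phi &
        forall (q : N0 R In) (F Ft : I -> H),
          is_frame ip F -> is_canonical_dual ip F Ft ->
          frame_measure_fun ip In m F Ft (phi q) = mu0 (bframe ip In F Ft) q].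
Proof.
have hpos : exists N, forall n, (N <= n)%N -> 0 < cardI R In n.
  have [N hN] := hunion i0; exists N => n hn.
  have mono k : i0 \in In (N + k)%N.
    elim: k => [|k ih]; first by rewrite addn0.
    by rewrite addnS; exact: (fsubsetP (hnest _)).
  rewrite /cardI ltr0n cardfs_gt0; apply/fset0Pn; exists i0.
  by rewrite -(subnKC hn); exact: mono.
have [hsep hnred] := hmin.
set wf := wof hnest hpos hm hWc.
have wspec : forall p x, bnd In x -> m x (wf p) = mu In x p := wof_spec hnest hpos hm hWc.
have wcont : continuous wf := wof_cont hsep.
pose phi := fun q : N0 R In => wf (repr q).
have phipi : forall p, phi (\pi_(N0 R In) p)%qT = wf p.
  move=> p; apply: (w_unique hsep) => x bx; rewrite /phi !wspec //.
  by have /asboolP := sim_repr_pi R In p; apply; exact: bnd_XR.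
have phispec : forall q x, bnd In x -> m x (phi q) = mu In x (repr q).
  by move=> q x bx; rewrite /phi wspec.
have cphi : continuous phi.
  apply/quotient_continuous.
  by have -> : phi \o \pi_(N0 R In)%qT = wf by apply: funext => p /=; exact: phipi.
have cN0 : compact [set: N0 R In].
  have -> : [set: N0 R In] = (\pi_(N0 R In))%qT @` [set: Nstar].
    by apply/seteqP; split => // q _; exists (repr q) => //; rewrite reprK.
  apply: continuous_compact; last exact: Nstar_compact.
  exact: continuous_subspaceT pi_continuous.
have phi_inj : forall q1 q2, phi q1 = phi q2 -> q1 = q2.
  move=> q1 q2 e; apply: N0_eq; apply/asboolP => x /(XR_bnd) bx.
  by rewrite -!phispec // e.
pose K := phi @` [set: N0 R In].
have Kw : forall p, K (wf p) by move=> p; exists (\pi_(N0 R In) p)%qT => //; exact: phipi.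
have cK : compact K.
  by apply: continuous_compact => //; exact: continuous_subspaceT.
have mnn : forall u, bnd In u -> (forall v, K v -> 0 <= m u v) -> forall v, 0 <= m u v.
  move=> u bu hK; apply: (m_nonneg hnest hpos hm bu) => p.
  by rewrite -wspec //; exact: hK.
have bc := bnd_c R hnest.
have surj : forall w, exists q, phi q = w.
  move=> w; apply: contrapT => hne; apply: hnred; exists K; split => //.
    split => // hsub; have [q _ hq] := hsub w Logic.I.
    by apply: hne; exists q.
  have [h1 h2 h3 h4 h5] := hm; split.
  - by move=> x hx; apply: continuous_subspaceT; exact: (m_cont hnest hm (XR_bnd hx)).
  - by move=> a x y hx hy v _; exact: h2.
  - move=> x y hx hy; rewrite -(h3 _ _ hx hy); split => hh v; last by move=> _; exact: hh.
    move=> _; have bx := XR_bnd hx; have byy := XR_bnd hy.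
    have a := mnn _ (bnd_sub bx byy) (fun w Kw => eq_ind _ (fun t => 0 <= t)
      (lexx 0) _ (esym (etrans (m_sub hnest hm w bx byy) (etrans (congr1 (fun t => t - m y w) (hh w Kw)) (subrr _))))) v.
    have b := mnn _ (bnd_sub byy bx) (fun w Kw => eq_ind _ (fun t => 0 <= t)
      (lexx 0) _ (esym (etrans (m_sub hnest hm w byy bx) (etrans (congr1 (fun t => m y w - t) (hh w Kw)) (subrr _))))) v.
    rewrite (m_sub hnest hm v bx byy) in a; rewrite (m_sub hnest hm v byy bx) in b; lra.
  - move=> x y hx hy; rewrite -(h4 _ _ hx hy); split => hh v; last by move=> _; exact: hh.
    move=> _; have bx := Xplus_bnd hnest hx; have byy := Xplus_bnd hnest hy.
    have a : 0 <= m (fun n => y n - x n) v.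
      apply: (mnn _ (bnd_sub byy bx)) => z Kz.
      by rewrite (m_sub hnest hm z byy bx) subr_ge0; exact: hh.
    by rewrite (m_sub hnest hm v byy bx) subr_ge0 in a.
  - by move=> v _; exact: h5.
pose psi := fun w => projT1 (cid (surj w)).
have psiK : cancel psi phi by move=> w; rewrite /psi; case: cid.
have phiK : cancel phi psi by move=> q; apply: phi_inj; rewrite psiK.
exists phi, psi; split => //.
- apply/continuous_closedP => C cC.
  have -> : psi @^-1` C = phi @` C.
    apply/seteqP; split => w /=.
      by move=> Cw; exists (psi w) => //; exact: psiK.
    by case=> q Cq <-; rewrite phiK.
  apply: compact_closed hWh _.
  apply: continuous_compact; first exact: continuous_subspaceT.
  exact: subclosed_compact cC cN0 _.
- move=> q F Ft hF hFt; rewrite /frame_measure_fun phispec //.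
  exact: (@bframe_bnd R I In hnest H ip hH F Ft hF hFt).
Qed.
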